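(* Let $P$ be a continuous $L$-ordered set. Then $({\rm pt}_L\sigma_L(P),{\rm sub}_{\sigma_L(P)})$, together with the map $\eta_P:P\to{\rm pt}_L\sigma_L(P)$, $x\mapsto[x]$, is a directed completion of $P$.
   Context: $L$ is a frame with implication $\to$. $L$-subsets of $X$ are maps $X\to L$; nonempty means $\bigvee_xA(x)=1$; ${\rm sub}_X(A,B)=\bigwedge_xA(x)\to B(x)$; $f^\rightarrow(A)(y)=\bigvee_{f(x)=y}A(x)$. An $L$-order on $P$: $e:P\times P\to L$ with $e(x,x)=1$, $e(x,y)\wedge e(y,z)\le e(x,z)$, $e(x,y)\wedge e(y,x)=1\Rightarrow x=y$. ${\downarrow}y(x)=e(x,y)$. $x=\sqcup A$ if $e(x,y)={\rm sub}_P(A,{\downarrow}y)$ for all $y$. Directed: nonempty and $D(x)\wedge D(y)\le\bigvee_zD(z)\wedge e(x,z)\wedge e(y,z)$; ideal = directed lower set. $L$-dcpo: every directed $L$-subset has a supremum. Scott continuous $f$: for each directed $D$ with a supremum, $f^\rightarrow(D)$ has a supremum equal to $f(\sqcup D)$. ${\Downarrow}x(y)=\bigwedge\{e(x,\sqcup I)\to I(y): I\text{ ideal with a supremum}\}$; $P$ is a continuous $L$-ordered set if each ${\Downarrow}x$ is directed with supremum $x$; a continuous $L$-dcpo is a continuous $L$-ordered set that is an $L$-dcpo. $\sigma_L(P)$ (Scott $L$-topology) is the set of $A\in L^P$ that are upper sets ($A(x)\wedge e(x,y)\le A(y)$) with $A(\sqcup D)=\bigvee_xA(x)\wedge D(x)$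 for every directed $D$ having a supremum. ${\rm pt}_L\sigma_L(P)$ is the set of maps $p:\sigma_L(P)\to L$ preserving binary meets and arbitrary joins and with $p(\lambda_P)=\lambda$ for every constant $\lambda_P$; it is $L$-ordered by ${\rm sub}_{\sigma_L(P)}(p,q)=\bigwedge_{A\in\sigma_L(P)}p(A)\to q(A)$. $[x](A)=A(x)$. A directed completion of a continuous $L$-ordered set $P$ is a continuous $L$-dcpo $Q$ with a Scott continuous $j:P\to Q$ such that for every continuous $L$-dcpo $M$ and Scott continuous $f:P\to M$ there is a unique Scott continuous $\bar f:Q\to M$ with $\bar f\circ j=f$. *)

(* Defs.v *)
Set Implicit Arguments.
Unset Strict Implicit.

Record frame := Frame {
  car :> Type;
  fle : car -> car -> Prop;
  fle_refl : forall a, fle a a;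
  fle_trans : forall a b c, fle a b -> fle b c -> fle a c;
  fle_antisym : forall a b, fle a b -> fle b a -> a = b;
  fsup : (car -> Prop) -> car;
  fsup_ub : forall (S : car -> Prop) a, S a -> fle a (fsup S);
  fsup_least : forall (S : car -> Prop) b, (forall a, S a -> fle a b) -> fle (fsup S) b;
  fmeet : car -> car -> car;
  fmeet_l : forall a b, fle (fmeet a b) a;
  fmeet_r : forall a b, fle (fmeet a b) b;
  fmeet_glb : forall a b c, fle c a -> fle c b -> fle c (fmeet a b);
  fdistr : forall a (S : car -> Prop),
      fmeet a (fsup S) = fsup (fun c => exists s, S s /\ c = fmeet a s)
}.
Arguments fle {f}. Arguments fsup {f}. Arguments fmeet {f}.

Section FrameOps.
Variable L : frame.
Definition ftop : L := fsup (fun _ => True).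
Definition Join (X : Type) (f : X -> L) : L := fsup (fun l => exists x, l = f x).
Definition Meet (X : Type) (f : X -> L) : L := fsup (fun l => forall x, fle l (f x)).
Definition fimp (a b : L) : L := fsup (fun c => fle (fmeet c a) b).
End FrameOps.
Arguments ftop {L}.

Section LOrder.
Variable L : frame.

Definition Lnonempty (X : Type) (A : X -> L) : Prop := Join A = ftop.
Definition Lsub (X : Type) (A B : X -> L) : L := Meet (fun x => fimp (A x) (B x)).
Definition Limage (X Y : Type) (f : X -> Y) (A : X -> L) : Y -> L :=
  fun y => fsup (fun l => exists x, f x = y /\ l = A x).

Definition is_Lorder (P : Type) (e : P -> P -> L) : Prop :=
  (forall x, e x x = ftop) /\
  (forall x y z, fle (fmeet (e x y) (e y z)) (e x z)) /\
  (forall x y, fmeet (e x y) (e y x) = ftop -> x = y).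

Variables (P : Type) (e : P -> P -> L).

Definition down (y : P) : P -> L := fun x => e x y.
Definition is_Lsup (A : P -> L) (x : P) : Prop := forall y, e x y = Lsub A (down y).
Definition Ldirected (D : P -> L) : Prop :=
  Lnonempty D /\
  forall x y, fle (fmeet (D x) (D y))
                  (Join (fun z => fmeet (fmeet (D z) (e x z)) (e y z))).
Definition Llower (A : P -> L) : Prop := forall x y, fle (fmeet (A y) (e x y)) (A x).
Definition Lupper (A : P -> L) : Prop := forall x y, fle (fmeet (A x) (e x y)) (A y).
Definition Lideal (I : P -> L) : Prop := Ldirected I /\ Llower I.
Definition Ldcpo : Prop :=
  is_Lorder e /\ forall D, Ldirected D -> exists x, is_Lsup D x.

Definition waybelow (x : P) : P -> L := fun y =>
  fsup (fun l => forall (I : P -> L) (s : P), Lideal I -> is_Lsup I s ->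
                   fle l (fimp (e x s) (I y))).

Definition continuous_Lordered : Prop :=
  is_Lorder e /\ forall x, Ldirected (waybelow x) /\ is_Lsup (waybelow x) x.
Definition continuous_Ldcpo : Prop := continuous_Lordered /\ Ldcpo.

Definition scott_open (A : P -> L) : Prop :=
  Lupper A /\
  forall D s, Ldirected D -> is_Lsup D s ->
    A s = Join (fun x => fmeet (A x) (D x)).

Definition Opens := { A : P -> L | scott_open A }.

(* points: maps sigma_L(P) -> L preserving binary meets, arbitrary joins
   and constants (meets/joins in sigma_L(P) are computed pointwise) *)
Definition is_Lpoint (p : Opens -> L) : Prop :=
  (forall U V W : Opens,
      proj1_sig W = (fun x => fmeet (proj1_sig U x) (proj1_sig V x)) ->
      p W = fmeet (p U) (p V)) /\
  (forall (S : Opens -> Prop) (W : Opens),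
      proj1_sig W = (fun x => fsup (fun l => exists U, S U /\ l = proj1_sig U x)) ->
      p W = fsup (fun l => exists U, S U /\ l = p U)) /\
  (forall (lam : L) (W : Opens), proj1_sig W = (fun _ => lam) -> p W = lam).

Definition ptL := { p : Opens -> L | is_Lpoint p }.

Definition sub_pt (p q : ptL) : L := Lsub (proj1_sig p) (proj1_sig q).

Definition evalpt (x : P) : Opens -> L := fun U => proj1_sig U x.

Lemma evalpt_point (x : P) : is_Lpoint (evalpt x).
Proof.
  unfold is_Lpoint, evalpt; split; [|split].
  - intros U V W H; rewrite H; reflexivity.
  - intros S W H; rewrite H; reflexivity.
  - intros lam W H; rewrite H; reflexivity.
Qed.

Definition eta (x : P) : ptL := exist _ (evalpt x) (evalpt_point x).
End LOrder.

Definition scott_continuous (L : frame) (P Q : Type) (eP : P -> P -> L) (eQ : Q -> Q -> L)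
  (f : P -> Q) : Prop :=
  forall D x, Ldirected eP D -> is_Lsup eP D x -> is_Lsup eQ (Limage f D) (f x).

Definition directed_completion (L : frame) (P Q : Type) (eP : P -> P -> L)
  (eQ : Q -> Q -> L) (j : P -> Q) : Prop :=
  continuous_Ldcpo eQ /\ scott_continuous eP eQ j /\
  forall (M : Type) (eM : M -> M -> L), continuous_Ldcpo eM ->
    forall f : P -> M, scott_continuous eP eM f ->
      exists! fbar : Q -> M, scott_continuous eQ eM fbar /\ (forall x, fbar (j x) = f x).

(* Main.v *)
Require Import Defs.
From Stdlib Require Import FunctionalExtensionality ProofIrrelevance ClassicalEpsilon.


Section Frame.
Context {L : frame}.
Local Infix "⊑" := (@fle L) (at level 70).
Local Infix "⊓" := (@fmeet L) (at level 40, left associativity).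

Lemma le_top (a : L) : a ⊑ ftop.
Proof. apply fsup_ub; exact I. Qed.

Lemma top_eq (a : L) : ftop ⊑ a -> a = ftop.
Proof. intro H; apply fle_antisym; [apply le_top|exact H]. Qed.

Lemma leT (a b c : L) : a ⊑ b -> b ⊑ c -> a ⊑ c.
Proof. apply fle_trans. Qed.

Ltac mp := first [ assumption | apply fle_refl | apply le_top
  | (apply fmeet_glb; mp)
  | (eapply fle_trans; [apply fmeet_l|]; mp)
  | (eapply fle_trans; [apply fmeet_r|]; mp) ].

Lemma meet_mono (a a' b b' : L) : a ⊑ a' -> b ⊑ b' -> a ⊓ b ⊑ a' ⊓ b'.
Proof. intros; apply fmeet_glb; eapply fle_trans; [apply fmeet_l| |apply fmeet_r|]; auto. Qed.

Lemma meetC (a b : L) : a ⊓ b = b ⊓ a.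
Proof. apply fle_antisym; mp. Qed.

Lemma meetA (a b c : L) : a ⊓ (b ⊓ c) = a ⊓ b ⊓ c.
Proof. apply fle_antisym; mp. Qed.

Lemma meet_topr (a : L) : a ⊓ ftop = a.
Proof. apply fle_antisym; mp. Qed.
Lemma meet_topl (a : L) : ftop ⊓ a = a.
Proof. apply fle_antisym; mp. Qed.

Lemma Join_ub (X : Type) (f : X -> L) x : f x ⊑ Join f.
Proof. apply fsup_ub; exists x; reflexivity. Qed.

Lemma le_Join (X : Type) (f : X -> L) x a : a ⊑ f x -> a ⊑ Join f.
Proof. intro H; eapply fle_trans; [exact H|apply Join_ub]. Qed.

Lemma Join_le (X : Type) (f : X -> L) b : (forall x, f x ⊑ b) -> Join f ⊑ b.
Proof. intro H; apply fsup_least; intros a [x ->]; auto. Qed.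

Lemma Meet_lb (X : Type) (f : X -> L) x : Meet f ⊑ f x.
Proof. apply fsup_least; intros a Ha; auto. Qed.

Lemma Meet_glb (X : Type) (f : X -> L) c : (forall x, c ⊑ f x) -> c ⊑ Meet f.
Proof. intro H; apply fsup_ub; exact H. Qed.

Lemma fsup_meet_l (S : L -> Prop) a b : (forall s, S s -> a ⊓ s ⊑ b) -> a ⊓ fsup S ⊑ b.
Proof. intro H; rewrite fdistr; apply fsup_least; intros c [s [Hs ->]]; auto. Qed.

Lemma fsup_meet_r (S : L -> Prop) a b : (forall s, S s -> s ⊓ a ⊑ b) -> fsup S ⊓ a ⊑ b.
Proof. intro H; rewrite meetC; apply fsup_meet_l; intros; rewrite meetC; auto. Qed.

Lemma Join_meet_l (X : Type) (f : X -> L) a b : (forall x, a ⊓ f x ⊑ b) -> a ⊓ Join f ⊑ b.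
Proof. intro H; apply fsup_meet_l; intros s [x ->]; auto. Qed.

Lemma Join_meet_r (X : Type) (f : X -> L) a b : (forall x, f x ⊓ a ⊑ b) -> Join f ⊓ a ⊑ b.
Proof. intro H; apply fsup_meet_r; intros s [x ->]; auto. Qed.

Lemma imp_intro (a b c : L) : c ⊓ a ⊑ b -> c ⊑ fimp a b.
Proof. intro H; apply fsup_ub; exact H. Qed.

Lemma imp_elim (a b : L) : fimp a b ⊓ a ⊑ b.
Proof. apply fsup_meet_r; intros s Hs; exact Hs. Qed.

Lemma imp_mp (a b d : L) : d ⊑ fimp a b -> d ⊑ a -> d ⊑ b.
Proof. intros H1 H2; eapply fle_trans; [|apply imp_elim]; apply fmeet_glb; eauto. Qed.

Lemma imp_adj (a b c : L) : c ⊑ fimp a b -> c ⊓ a ⊑ b.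
Proof. intro H; apply (imp_mp a b); mp. Qed.

Lemma le_Join_elim (X : Type) (f : X -> L) a y b :
  a ⊑ Join f -> (forall x, f x ⊓ y ⊑ b) -> a ⊓ y ⊑ b.
Proof. intros H1 H2; eapply fle_trans; [apply meet_mono; [exact H1|apply fle_refl]|]; apply Join_meet_r; auto. Qed.

Lemma le_Join_elim_r (X : Type) (f : X -> L) a y b :
  y ⊑ Join f -> (forall x, a ⊓ f x ⊑ b) -> a ⊓ y ⊑ b.
Proof. intros H1 H2; eapply fle_trans; [apply meet_mono; [apply fle_refl|exact H1]|]; apply Join_meet_l; auto. Qed.

Lemma Meet_imp_lb (X : Type) (f g : X -> L) x c :
  c ⊑ Meet (fun x => fimp (f x) (g x)) -> c ⊑ f x -> c ⊑ g x.
Proof. intros H1 H2; apply (imp_mp (f x)); auto. eapply fle_trans; [exact H1|]. apply (Meet_lb _ (fun x => fimp (f x) (g x))). Qed.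

End Frame.


Ltac mp := first [ assumption | apply fle_refl | apply le_top
  | (apply fmeet_glb; mp)
  | (eapply fle_trans; [apply fmeet_l|]; mp)
  | (eapply fle_trans; [apply fmeet_r|]; mp) ].

Section LO.
Context {L : frame}.
Local Infix "⊑" := (@fle L) (at level 70).
Local Infix "⊓" := (@fmeet L) (at level 40, left associativity).

Lemma Lsub_ge (X : Type) (A B : X -> L) c : (forall x, c ⊓ A x ⊑ B x) -> c ⊑ Lsub A B.
Proof. intro H; apply Meet_glb; intro x; apply imp_intro; auto. Qed.

Lemma Lsub_app (X : Type) (A B : X -> L) c x : c ⊑ Lsub A B -> c ⊑ A x -> c ⊑ B x.
Proof. apply Meet_imp_lb. Qed.

Lemma Lsub_app' (X : Type) (A B : X -> L) x : Lsub A B ⊓ A x ⊑ B x.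
Proof. apply (Lsub_app _ A B); mp. Qed.

Context {X : Type} (e : X -> X -> L) (He : is_Lorder e).

Lemma Lrefl x : e x x = ftop. Proof. apply He. Qed.
Lemma Ltrans x y z : e x y ⊓ e y z ⊑ e x z. Proof. apply He. Qed.

Lemma Lsup_ub D x z : is_Lsup e D x -> D z ⊑ e z x.
Proof.
  intro H. apply (Lsub_app _ D (down e x)); [|apply fle_refl].
  rewrite <- H, Lrefl; apply le_top.
Qed.

Lemma Lsup_le D x y c : is_Lsup e D x -> (forall z, c ⊓ D z ⊑ e z y) -> c ⊑ e x y.
Proof. intros H H2; rewrite (H y); apply Lsub_ge; auto. Qed.

Lemma Lsup_unique D x y : is_Lsup e D x -> is_Lsup e D y -> x = y.
Proof.
  intros Hx Hy. apply He.
  apply top_eq; apply fmeet_glb.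
  - apply (Lsup_le D x y _ Hx). intro z; eapply fle_trans; [apply fmeet_r|]. apply (Lsup_ub D y z Hy).
  - apply (Lsup_le D y x _ Hy). intro z; eapply fle_trans; [apply fmeet_r|]. apply (Lsup_ub D x z Hx).
Qed.

Lemma Lsup_elim D x y z : is_Lsup e D x -> e x y ⊓ D z ⊑ e z y.
Proof. intro H; rewrite (H y); apply (Lsub_app' _ D (down e y) z). Qed.

Lemma down_sup x : is_Lsup e (down e x) x.
Proof.
  intro y; apply fle_antisym.
  - apply Lsub_ge; intro z; unfold down; rewrite meetC; apply Ltrans.
  - apply (Lsub_app _ (down e x) (down e y) _ x); [apply fle_refl|].
    unfold down; rewrite Lrefl; apply le_top.
Qed.

Lemma down_directed x : Ldirected e (down e x).
Proof.
  split.
  - apply top_eq. eapply le_Join; unfold down; rewrite (Lrefl x); apply fle_refl.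
  - intros a b. unfold down. apply (le_Join _ _ x). rewrite (Lrefl x). mp.
Qed.

Lemma down_lower x : Llower e (down e x).
Proof. intros a b; unfold down; rewrite meetC; apply Ltrans. Qed.

End LO.

Lemma Limage_Lsub {L : frame} (X Y : Type) (f : X -> Y) (D : X -> L) (B : Y -> L) :
  Lsub (Limage f D) B = Lsub D (fun x => B (f x)).
Proof.
  apply fle_antisym.
  - apply Lsub_ge; intro x. apply (Lsub_app _ (Limage f D) B _ (f x)); [mp|].
    eapply fle_trans; [apply fmeet_r|]. apply fsup_ub. exists x; auto.
  - apply Lsub_ge; intro y. apply fsup_meet_l. intros s [x [<- ->]]. apply (Lsub_app' _ D (fun x => B (f x)) x).
Qed.

Lemma scott_mono {L : frame} (P M : Type) (eP : P -> P -> L) (eM : M -> M -> L) f :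
  is_Lorder eP -> is_Lorder eM -> scott_continuous eP eM f ->
  forall x y, fle (eP x y) (eM (f x) (f y)).
Proof.
  intros HP HM Hf x y.
  pose proof (Hf (down eP y) y (down_directed eP HP y) (down_sup eP HP y)) as H.
  eapply fle_trans; [|apply (Lsup_ub eM HM _ _ _ H)].
  apply fsup_ub. exists x; auto.
Qed.



Section Q.
Context {L : frame} {P : Type} (e : P -> P -> L).
Local Infix "⊑" := (@fle L) (at level 70).
Local Infix "⊓" := (@fmeet L) (at level 40, left associativity).
Local Notation Q := (ptL e).
Local Notation E := (@sub_pt L P e).
Local Notation pv p := (proj1_sig p).

Lemma pt_mono (p : Opens e -> L) (Hp : is_Lpoint p) (U V : Opens e) :
  (forall x, pv U x ⊑ pv V x) -> p U ⊑ p V.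
Proof.
  intro H. rewrite (proj1 Hp U V U).
  - apply fmeet_r.
  - apply functional_extensionality; intro x; apply fle_antisym; [apply fmeet_glb; auto; apply fle_refl|apply fmeet_l].
Qed.

Lemma E_app (p q : Q) A : E p q ⊓ pv p A ⊑ pv q A.
Proof. apply (Lsub_app' _ (pv p) (pv q) A). Qed.

Lemma E_order : is_Lorder E.
Proof.
  split; [|split].
  - intro p; apply top_eq; apply Lsub_ge; intro A; apply fmeet_r.
  - intros p q r; apply Lsub_ge; intro A.
    apply (leT _ (E q r ⊓ pv q A)); [|apply E_app].
    apply fmeet_glb; [mp|]. apply (leT _ (E p q ⊓ pv p A)); [mp|apply E_app].
  - intros p q H. destruct p as [p Hp], q as [q Hq].
    assert (p = q) as ->.
    { apply functional_extensionality; intro A; apply fle_antisym.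
      - apply (Lsub_app _ p q); [|apply fle_refl]. eapply fle_trans; [apply le_top|].
        rewrite <- H; apply fmeet_l.
      - apply (Lsub_app _ q p); [|apply fle_refl]. eapply fle_trans; [apply le_top|].
        rewrite <- H; apply fmeet_r. }
    f_equal; apply proof_irrelevance.
Qed.

Definition psup (D : Q -> L) : Opens e -> L := fun A => Join (fun q : Q => D q ⊓ pv q A).

Lemma psup_point D : Ldirected E D -> is_Lpoint (psup D).
Proof.
  intros [Dne Ddir]. unfold psup. split; [|split].
  - intros U V W HW.
    assert (Hq : forall q : Q, pv q W = pv q U ⊓ pv q V) by (intro q; apply (proj1 (proj2_sig q) U V W HW)).
    apply fle_antisym.
    + apply Join_le; intro q; rewrite Hq; apply fmeet_glb; apply (le_Join _ _ q); mp.
    + apply Join_meet_r; intro q; apply Join_meet_l; intro q'.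
      apply (leT _ ((D q ⊓ D q') ⊓ (pv q U ⊓ pv q' V))); [mp|].
      apply (le_Join_elim _ _ _ _ _ (Ddir q q')). intro r.
      apply (le_Join _ _ r). rewrite Hq. apply fmeet_glb; [mp|apply fmeet_glb].
      * apply (leT _ (E q r ⊓ pv q U)); [mp|apply E_app].
      * apply (leT _ (E q' r ⊓ pv q' V)); [mp|apply E_app].
  - intros S W HW.
    assert (Hq : forall q : Q, pv q W = fsup (fun l => exists U, S U /\ l = pv q U))
      by (intro q; apply (proj1 (proj2 (proj2_sig q)) S W HW)).
    apply fle_antisym.
    + apply Join_le; intro q; rewrite Hq; apply fsup_meet_l; intros s [U [HU ->]].
      apply (leT _ (Join (fun q0 : Q => D q0 ⊓ pv q0 U))); [apply (Join_ub _ (fun q0 : Q => D q0 ⊓ pv q0 U) q)|].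
      apply fsup_ub; exists U; auto.
    + apply fsup_least; intros l [U [HU ->]]. apply Join_le; intro q; apply (le_Join _ _ q).
      apply meet_mono; [apply fle_refl|]. rewrite Hq; apply fsup_ub; exists U; auto.
  - intros lam W HW.
    assert (Hq : forall q : Q, pv q W = lam) by (intro q; apply (proj2 (proj2 (proj2_sig q)) lam W HW)).
    apply fle_antisym.
    + apply Join_le; intro q; rewrite Hq; apply fmeet_r.
    + rewrite <- (meet_topl lam) at 1. unfold Lnonempty in Dne. rewrite <- Dne.
      apply Join_meet_r; intro q; apply (le_Join _ _ q); rewrite Hq; apply fle_refl.
Qed.

Definition Qsup (D : Q -> L) (H : Ldirected E D) : Q := exist _ (psup D) (psup_point D H).

Lemma Qsup_sup D (H : Ldirected E D) : is_Lsup E D (Qsup D H).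
Proof.
  intro t. apply fle_antisym.
  - apply Lsub_ge; intro q. unfold down. apply Lsub_ge; intro A.
    apply (leT _ (E (Qsup D H) t ⊓ pv (Qsup D H) A)); [|apply E_app].
    apply fmeet_glb; [mp|]. simpl. unfold psup. apply (le_Join _ _ q). mp.
  - apply Lsub_ge; intro A. simpl; unfold psup. apply Join_meet_l; intro q.
    apply (leT _ (E q t ⊓ pv q A)); [|apply E_app]. apply fmeet_glb; [|mp].
    apply (leT _ (Lsub D (down E t) ⊓ D q)); [mp|]. apply (Lsub_app' _ D (down E t) q).
Qed.

Lemma Q_dcpo : Ldcpo E.
Proof. split; [apply E_order|]. intros D H; exists (Qsup D H); apply Qsup_sup. Qed.

Lemma Qsup_pointwise D s A : Ldirected E D -> is_Lsup E D s -> pv s A = Join (fun q : Q => D q ⊓ pv q A).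
Proof.
  intros H Hs. rewrite (Lsup_unique E E_order D s (Qsup D H) Hs (Qsup_sup D H)). reflexivity.
Qed.

End Q.



Section Op.
Context {L : frame} {P : Type} (e : P -> P -> L) (He : is_Lorder e).
Local Infix "⊑" := (@fle L) (at level 70).
Local Infix "⊓" := (@fmeet L) (at level 40, left associativity).
Local Notation pv p := (proj1_sig p).

Lemma open_upper (U : Opens e) x y : pv U x ⊓ e x y ⊑ pv U y.
Proof. apply (proj1 (proj2_sig U)). Qed.

Lemma open_scott (U : Opens e) D s : Ldirected e D -> is_Lsup e D s ->
  pv U s = Join (fun x => pv U x ⊓ D x).
Proof. apply (proj2 (proj2_sig U)). Qed.

Lemma meet_scott (U V : Opens e) : scott_open e (fun x => pv U x ⊓ pv V x).
Proof.
  split.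
  - intros x y. apply fmeet_glb.
    + apply (leT _ (pv U x ⊓ e x y)); [mp|apply open_upper].
    + apply (leT _ (pv V x ⊓ e x y)); [mp|apply open_upper].
  - intros D s HD Hs. rewrite (open_scott U D s HD Hs), (open_scott V D s HD Hs).
    apply fle_antisym.
    + apply Join_meet_r; intro x; apply Join_meet_l; intro x'.
      apply (leT _ ((D x ⊓ D x') ⊓ (pv U x ⊓ pv V x'))); [mp|].
      apply (le_Join_elim _ _ _ _ _ (proj2 HD x x')). intro z.
      apply (le_Join _ _ z). apply fmeet_glb; [apply fmeet_glb|mp].
      * apply (leT _ (pv U x ⊓ e x z)); [mp|apply open_upper].
      * apply (leT _ (pv V x' ⊓ e x' z)); [mp|apply open_upper].
    + apply Join_le; intro x; apply fmeet_glb; apply (le_Join _ _ x); mp.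
Qed.
Definition open_meet (U V : Opens e) : Opens e := exist _ _ (meet_scott U V).

Lemma const_scott (c : L) : scott_open e (fun _ => c).
Proof.
  split.
  - intros x y; apply fmeet_l.
  - intros D s [Dne _] Hs. apply fle_antisym.
    + rewrite <- (meet_topr c) at 1. unfold Lnonempty in Dne. rewrite <- Dne.
      apply Join_meet_l; intro x; apply (le_Join _ _ x); apply fle_refl.
    + apply Join_le; intro x; apply fmeet_l.
Qed.
Definition open_const (c : L) : Opens e := exist _ _ (const_scott c).

Lemma Join_scott (I : Type) (F : I -> Opens e) : scott_open e (fun x => Join (fun i => pv (F i) x)).
Proof.
  split.
  - intros x y. apply Join_meet_r; intro i; apply (le_Join _ _ i); apply open_upper.
  - intros D s HD Hs. apply fle_antisym.
    + apply Join_le; intro i. rewrite (open_scott (F i) D s HD Hs).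
      apply Join_le; intro x; apply (le_Join _ _ x). apply meet_mono; [|apply fle_refl].
      apply (Join_ub _ (fun i => pv (F i) x) i).
    + apply Join_le; intro x. apply Join_meet_r; intro i. apply (le_Join _ _ i).
      rewrite (open_scott (F i) D s HD Hs). apply (Join_ub _ (fun x => pv (F i) x ⊓ D x) x).
Qed.
Definition open_Join (I : Type) (F : I -> Opens e) : Opens e := exist _ _ (Join_scott I F).

Lemma pt_meet (p : Opens e -> L) (Hp : is_Lpoint p) U V : p (open_meet U V) = p U ⊓ p V.
Proof. apply (proj1 Hp); reflexivity. Qed.

Lemma pt_const (p : Opens e -> L) (Hp : is_Lpoint p) c : p (open_const c) = c.
Proof. apply (proj2 (proj2 Hp)); reflexivity. Qed.

Lemma Join_as_fsup (I : Type) (X : Type) (F : I -> X) (g : X -> L) :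
  Join (fun i => g (F i)) = fsup (fun l => exists U, (exists i, U = F i) /\ l = g U).
Proof.
  apply fle_antisym.
  - apply Join_le; intro i; apply fsup_ub; exists (F i); split; [exists i|]; reflexivity.
  - apply fsup_least; intros l [U [[i ->] ->]]. apply (Join_ub _ (fun i => g (F i)) i).
Qed.

Lemma pt_Join (p : Opens e -> L) (Hp : is_Lpoint p) (I : Type) (F : I -> Opens e) :
  p (open_Join I F) = Join (fun i => p (F i)).
Proof.
  rewrite (Join_as_fsup I _ F p). apply (proj1 (proj2 Hp)).
  simpl. apply functional_extensionality; intro x. apply (Join_as_fsup I _ F (fun U => pv U x)).
Qed.

End Op.



Section Cont.
Context {L : frame} {P : Type} (e : P -> P -> L) (Hc : continuous_Lordered e).
Local Infix "⊑" := (@fle L) (at level 70).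
Local Infix "⊓" := (@fmeet L) (at level 40, left associativity).
Local Notation pv p := (proj1_sig p).
Local Notation W := (waybelow e).

Let He : is_Lorder e := proj1 Hc.

Lemma etr x y z c : c ⊑ e x y -> c ⊑ e y z -> c ⊑ e x z.
Proof. intros; eapply fle_trans; [|apply (Ltrans e He x y z)]; apply fmeet_glb; auto. Qed.

Lemma wb_elim I s x y : Lideal e I -> is_Lsup e I s -> W x y ⊓ e x s ⊑ I y.
Proof.
  intros HI Hs. apply fsup_meet_r; intros l Hl. apply imp_adj. apply Hl; auto.
Qed.

Lemma wb_intro c x y : (forall I s, Lideal e I -> is_Lsup e I s -> c ⊓ e x s ⊑ I y) -> c ⊑ W x y.
Proof. intro H; apply fsup_ub; intros I s HI Hs; apply imp_intro; auto. Qed.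

Lemma down_ideal x : Lideal e (down e x).
Proof. split; [apply (down_directed e He)|apply (down_lower e He)]. Qed.

Lemma wb_le x y : W x y ⊑ e y x.
Proof.
  apply (leT _ (W x y ⊓ e x x)); [rewrite (Lrefl e He); mp|].
  apply (wb_elim (down e x) x x y (down_ideal x) (down_sup e He x)).
Qed.

Lemma wb_upper x x' y : W x y ⊓ e x x' ⊑ W x' y.
Proof.
  apply wb_intro; intros I s HI Hs. apply (leT _ (W x y ⊓ e x s)); [|apply wb_elim; auto].
  apply fmeet_glb; [mp|]. apply etr with x'; mp.
Qed.

Lemma wb_lower x y y' : W x y ⊓ e y' y ⊑ W x y'.
Proof.
  apply wb_intro; intros I s HI Hs. apply (leT _ (I y ⊓ e y' y)); [|apply (proj2 HI)].
  apply fmeet_glb; [|mp]. apply (leT _ (W x y ⊓ e x s)); [mp|apply wb_elim; auto].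
Qed.

Lemma wb_dir x : Ldirected e (W x). Proof. apply (proj2 Hc x). Qed.
Lemma wb_sup x : is_Lsup e (W x) x. Proof. apply (proj2 Hc x). Qed.

Lemma wb_ne x : ftop ⊑ Join (fun y => W x y).
Proof. destruct (wb_dir x) as [Hn _]. unfold Lnonempty in Hn. rewrite <- Hn; apply fle_refl. Qed.

Definition Iint x y := Join (fun z => W x z ⊓ W z y).

Lemma Iint_ideal x : Lideal e (Iint x).
Proof.
  split; [split|].
  - apply top_eq. eapply fle_trans; [apply (wb_ne x)|]. apply Join_le; intro z.
    apply (leT _ (W x z ⊓ ftop)); [rewrite meet_topr; apply fle_refl|].
    apply (le_Join_elim_r _ _ _ _ _ (wb_ne z)). intro y. apply (le_Join _ _ y).
    apply (Join_ub _ (fun z => W x z ⊓ W z y) z).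
  - intros a b. unfold Iint. apply Join_meet_r; intro z; apply Join_meet_l; intro z'.
    apply (leT _ ((W x z ⊓ W x z') ⊓ (W z a ⊓ W z' b))); [mp|].
    apply (le_Join_elim _ _ _ _ _ (proj2 (wb_dir x) z z')). intro w.
    apply (leT _ (W x w ⊓ (W w a ⊓ W w b))).
    { apply fmeet_glb; [mp|apply fmeet_glb].
      - apply (leT _ (W z a ⊓ e z w)); [mp|apply wb_upper].
      - apply (leT _ (W z' b ⊓ e z' w)); [mp|apply wb_upper]. }
    apply (le_Join_elim_r _ _ _ _ _ (proj2 (wb_dir w) a b)). intro c.
    apply (le_Join _ _ c). apply fmeet_glb; [apply fmeet_glb|mp]; [|mp].
    apply (le_Join _ _ w). mp.
  - intros a b. unfold Iint. apply Join_meet_r; intro z. apply (le_Join _ _ z).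
    apply fmeet_glb; [mp|]. apply (leT _ (W z b ⊓ e a b)); [mp|apply wb_lower].
Qed.

Lemma Iint_sup x : is_Lsup e (Iint x) x.
Proof.
  intro t. apply fle_antisym.
  - apply Lsub_ge; intro y. unfold Iint. apply Join_meet_l; intro z. unfold down.
    apply etr with x; [|mp]. apply etr with z.
    + apply (leT _ (W z y)); [mp|apply wb_le].
    + apply (leT _ (W x z)); [mp|apply wb_le].
  - apply (Lsup_le e (W x) x t _ (wb_sup x)). intro z.
    apply (Lsup_le e (W z) z t _ (wb_sup z)). intro y.
    apply (leT _ (Lsub (Iint x) (down e t) ⊓ Iint x y)); [|apply (Lsub_app' _ (Iint x) (down e t) y)].
    apply fmeet_glb; [mp|]. apply (le_Join _ _ z). mp.
Qed.

Lemma interp x y : W x y ⊑ Iint x y.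
Proof.
  apply (leT _ (W x y ⊓ e x x)); [rewrite (Lrefl e He); mp|].
  apply wb_elim; [apply Iint_ideal|apply Iint_sup].
Qed.

Definition gen (D : P -> L) z := Join (fun x => D x ⊓ e z x).

Lemma gen_ideal D s : Ldirected e D -> is_Lsup e D s -> Lideal e (gen D) /\ is_Lsup e (gen D) s.
Proof.
  intros [Dne Ddir] Hs. split; [split; [split|]|].
  - apply top_eq. unfold Lnonempty in Dne. rewrite <- Dne. apply Join_le; intro x.
    apply (le_Join _ _ x). apply (le_Join _ _ x). rewrite (Lrefl e He); mp.
  - intros a b. unfold gen. apply Join_meet_r; intro x; apply Join_meet_l; intro x'.
    apply (leT _ ((D x ⊓ D x') ⊓ (e a x ⊓ e b x'))); [mp|].
    apply (le_Join_elim _ _ _ _ _ (Ddir x x')). intro z.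
    apply (le_Join _ _ z). apply fmeet_glb; [apply fmeet_glb|].
    + apply (le_Join _ _ z). rewrite (Lrefl e He); mp.
    + apply etr with x; mp.
    + apply etr with x'; mp.
  - intros a b. unfold gen. apply Join_meet_r; intro x. apply (le_Join _ _ x).
    apply fmeet_glb; [mp|]. apply etr with b; mp.
  - intro t. apply fle_antisym.
    + apply Lsub_ge; intro z. unfold gen. apply Join_meet_l; intro x. unfold down.
      apply etr with s; [|mp]. apply etr with x; [mp|].
      apply (leT _ (D x)); [mp|apply (Lsup_ub e He D s x Hs)].
    + apply (Lsup_le e D s t _ Hs). intro z.
      apply (leT _ (Lsub (gen D) (down e t) ⊓ gen D z)); [|apply (Lsub_app' _ (gen D) (down e t) z)].
      apply fmeet_glb; [mp|]. apply (le_Join _ _ z). rewrite (Lrefl e He); mp.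
Qed.

Lemma up_scott y : scott_open e (fun x => W x y).
Proof.
  split.
  - intros x x'. apply wb_upper.
  - intros D s HD Hs. destruct (gen_ideal D s HD Hs) as [Hg Hgs]. apply fle_antisym.
    + eapply fle_trans; [apply interp|]. unfold Iint. apply Join_le; intro z.
      apply (leT _ (gen D z ⊓ W z y)).
      { apply fmeet_glb; [|mp]. apply (leT _ (W s z ⊓ e s s)); [rewrite (Lrefl e He); mp|].
        apply wb_elim; auto. }
      unfold gen at 1. apply Join_meet_r; intro x. apply (le_Join _ _ x).
      apply fmeet_glb; [|mp]. apply (leT _ (W z y ⊓ e z x)); [mp|apply wb_upper].
    + apply Join_le; intro x. apply (leT _ (W x y ⊓ e x s)); [|apply wb_upper].
      apply fmeet_glb; [mp|]. apply (leT _ (D x)); [mp|apply (Lsup_ub e He D s x Hs)].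
Qed.
Definition up_open y : Opens e := exist _ _ (up_scott y).

Lemma open_decomp (A : Opens e) x : pv A x = Join (fun y => pv A y ⊓ W x y).
Proof. apply (open_scott e A); [apply wb_dir|apply wb_sup]. Qed.

End Cont.



Section QC.
Context {L : frame} {P : Type} (e : P -> P -> L) (Hc : continuous_Lordered e).
Local Infix "⊑" := (@fle L) (at level 70).
Local Infix "⊓" := (@fmeet L) (at level 40, left associativity).
Local Notation pv p := (proj1_sig p).
Local Notation W := (waybelow e).
Local Notation Q := (ptL e).
Local Notation E := (@sub_pt L P e).
Local Notation up := (up_open e Hc).

Let He : is_Lorder e := proj1 Hc.
Let HE : is_Lorder E := E_order e.

Lemma Etr (p q r : Q) c : c ⊑ E p q -> c ⊑ E q r -> c ⊑ E p r.
Proof. intros; eapply fle_trans; [|apply (Ltrans E HE p q r)]; apply fmeet_glb; auto. Qed.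

Lemma up_le_E (r : Q) y : pv r (up y) ⊑ E (eta e y) r.
Proof.
  apply Lsub_ge; intro A. simpl. unfold evalpt.
  rewrite <- (pt_const e (pv r) (proj2_sig r) (pv A y)).
  rewrite <- (pt_meet e (pv r) (proj2_sig r)).
  apply (pt_mono e _ (proj2_sig r)). intro x. simpl.
  apply (leT _ (pv A y ⊓ e y x)); [|apply open_upper].
  apply fmeet_glb; [mp|]. apply (leT _ (W x y)); [mp|apply (wb_le e Hc)].
Qed.

Lemma e_le_E y z : e y z ⊑ E (eta e y) (eta e z).
Proof. apply Lsub_ge; intro A. simpl; unfold evalpt. rewrite meetC; apply open_upper. Qed.

Lemma p_up_ne (p : Q) : ftop ⊑ Join (fun y => pv p (up y)).
Proof.
  rewrite <- (pt_Join e (pv p) (proj2_sig p)).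
  rewrite <- (pt_const e (pv p) (proj2_sig p) ftop) at 1.
  apply (pt_mono e _ (proj2_sig p)). intro x. simpl. apply (wb_ne e Hc x).
Qed.

Lemma p_up_dir (p : Q) y1 y2 :
  pv p (up y1) ⊓ pv p (up y2) ⊑ Join (fun z => pv p (up z) ⊓ (e y1 z ⊓ e y2 z)).
Proof.
  rewrite <- (pt_meet e (pv p) (proj2_sig p)).
  eapply fle_trans; [|apply fle_refl].
  apply (leT _ (pv p (open_Join e _ (fun z => open_meet e (up z) (open_const e (e y1 z ⊓ e y2 z)))))).
  - apply (pt_mono e _ (proj2_sig p)). intro x. simpl.
    eapply fle_trans; [apply (proj2 (wb_dir e Hc x) y1 y2)|].
    apply Join_le; intro z; apply (le_Join _ _ z); mp.
  - rewrite (pt_Join e (pv p) (proj2_sig p)). apply Join_le; intro z; apply (le_Join _ _ z).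
    rewrite (pt_meet e (pv p) (proj2_sig p)), (pt_const e (pv p) (proj2_sig p)). apply fle_refl.
Qed.

Lemma p_decomp (p : Q) (A : Opens e) : pv p A ⊑ Join (fun y => pv p (up y) ⊓ pv A y).
Proof.
  apply (leT _ (pv p (open_Join e _ (fun y => open_meet e (up y) (open_const e (pv A y)))))).
  - apply (pt_mono e _ (proj2_sig p)). intro x. simpl. rewrite (open_decomp e Hc A x).
    apply Join_le; intro y; apply (le_Join _ _ y); mp.
  - rewrite (pt_Join e (pv p) (proj2_sig p)). apply Join_le; intro y; apply (le_Join _ _ y).
    rewrite (pt_meet e (pv p) (proj2_sig p)), (pt_const e (pv p) (proj2_sig p)). apply fle_refl.
Qed.

Definition R (p q : Q) := Join (fun y => pv p (up y) ⊓ E q (eta e y)).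

Lemma R_eta p y : pv p (up y) ⊑ R p (eta e y).
Proof. apply (le_Join _ _ y). apply fmeet_glb; [apply fle_refl|]. rewrite (Lrefl E HE). apply le_top. Qed.

Lemma R_ideal p : Lideal E (R p).
Proof.
  split; [split|].
  - apply top_eq. eapply fle_trans; [apply p_up_ne|]. apply Join_le; intro y.
    apply (le_Join _ _ (eta e y)). apply R_eta.
  - intros q1 q2. unfold R at 1 2. apply Join_meet_r; intro y1; apply Join_meet_l; intro y2.
    apply (leT _ ((pv p (up y1) ⊓ pv p (up y2)) ⊓ (E q1 (eta e y1) ⊓ E q2 (eta e y2)))); [mp|].
    apply (le_Join_elim _ _ _ _ _ (p_up_dir p y1 y2)). intro z.
    apply (le_Join _ _ (eta e z)). apply fmeet_glb; [apply fmeet_glb|].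
    + apply (leT _ (pv p (up z))); [mp|apply R_eta].
    + apply Etr with (eta e y1); [mp|]. apply (leT _ (e y1 z)); [mp|apply e_le_E].
    + apply Etr with (eta e y2); [mp|]. apply (leT _ (e y2 z)); [mp|apply e_le_E].
  - intros q' q. unfold R. apply Join_meet_r; intro y. apply (le_Join _ _ y).
    apply fmeet_glb; [mp|]. apply Etr with q; mp.
Qed.

Lemma R_le p q : R p q ⊑ E q p.
Proof.
  apply Join_le; intro y. apply Etr with (eta e y); [mp|].
  apply (leT _ (pv p (up y))); [mp|apply up_le_E].
Qed.

Lemma R_sup p : is_Lsup E (R p) p.
Proof.
  intro t. apply fle_antisym.
  - apply Lsub_ge; intro q. unfold down. apply Etr with p; [|mp].
    apply (leT _ (R p q)); [mp|apply R_le].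
  - apply Lsub_ge; intro A.
    apply (le_Join_elim_r _ _ _ _ _ (p_decomp p A)). intro y.
    apply (leT _ (E (eta e y) t ⊓ pv (eta e y) A)); [|apply E_app].
    apply fmeet_glb; [|simpl; unfold evalpt; mp].
    apply (leT _ (Lsub (R p) (down E t) ⊓ R p (eta e y))); [|apply (Lsub_app' _ (R p) (down E t) (eta e y))].
    apply fmeet_glb; [mp|]. apply (leT _ (pv p (up y))); [mp|apply R_eta].
Qed.

Lemma R_wb p : R p = waybelow E p.
Proof.
  apply functional_extensionality; intro q. apply fle_antisym.
  - apply fsup_ub. intros I s HI Hs. apply imp_intro.
    unfold R. apply Join_meet_r; intro y.
    apply (leT _ ((E p s ⊓ pv p (up y)) ⊓ E q (eta e y))); [mp|].
    apply (leT _ (pv s (up y) ⊓ E q (eta e y))); [apply meet_mono; [apply E_app|apply fle_refl]|].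
    rewrite (Qsup_pointwise e I s _ (proj1 HI) Hs).
    apply Join_meet_r; intro r.
    apply (leT _ (I r ⊓ E q r)); [|apply (proj2 HI)].
    apply fmeet_glb; [mp|]. apply Etr with (eta e y); [mp|].
    apply (leT _ (pv r (up y))); [mp|apply up_le_E].
  - apply fsup_least; intros l Hl.
    apply (leT _ (l ⊓ E p p)); [rewrite (Lrefl E HE); mp|].
    apply imp_adj. apply Hl; [apply R_ideal|apply R_sup].
Qed.

Lemma Q_cont : continuous_Ldcpo E.
Proof.
  split; [split|apply Q_dcpo].
  - apply HE.
  - intro p. rewrite <- R_wb. split; [apply R_ideal|apply R_sup].
Qed.

Lemma eta_cont : scott_continuous e E (eta e).
Proof.
  intros D x HD Hx t. unfold down. rewrite Limage_Lsub. apply fle_antisym.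
  - apply Lsub_ge; intro y. apply Lsub_ge; intro A. simpl; unfold evalpt.
    apply (leT _ (E (eta e x) t ⊓ pv (eta e x) A)); [|apply E_app].
    apply fmeet_glb; [mp|]. simpl; unfold evalpt.
    apply (leT _ (pv A y ⊓ e y x)); [|apply open_upper].
    apply fmeet_glb; [mp|]. apply (leT _ (D y)); [mp|apply (Lsup_ub e He D x y Hx)].
  - apply Lsub_ge; intro A. simpl; unfold evalpt. rewrite (open_scott e A D x HD Hx).
    apply Join_meet_l; intro y.
    apply (leT _ (E (eta e y) t ⊓ pv (eta e y) A)); [|apply E_app].
    apply fmeet_glb; [|simpl; unfold evalpt; mp].
    apply (leT _ (Lsub D (fun y => E (eta e y) t) ⊓ D y)); [mp|].
    apply (Lsub_app' _ D (fun y => E (eta e y) t) y).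
Qed.

End QC.



Section U.
Context {L : frame} {P : Type} (e : P -> P -> L) (Hc : continuous_Lordered e).
Context {M : Type} (eM : M -> M -> L) (HM : continuous_Ldcpo eM) (f : P -> M)
  (Hf : scott_continuous e eM f).
Local Infix "⊑" := (@fle L) (at level 70).
Local Infix "⊓" := (@fmeet L) (at level 40, left associativity).
Local Notation pv p := (proj1_sig p).
Local Notation W := (waybelow e).
Local Notation Q := (ptL e).
Local Notation E := (@sub_pt L P e).
Local Notation up := (up_open e Hc).

Let He : is_Lorder e := proj1 Hc.
Let HE : is_Lorder E := E_order e.
Let HeM : is_Lorder eM := proj1 (proj2 HM).

Lemma Mtr x y z c : c ⊑ eM x y -> c ⊑ eM y z -> c ⊑ eM x z.
Proof. intros; eapply fle_trans; [|apply (Ltrans eM HeM x y z)]; apply fmeet_glb; auto. Qed.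

Definition Fp (p : Q) : M -> L := Limage f (fun y => pv p (up y)).

Lemma Fp_dir p : Ldirected eM (Fp p).
Proof.
  split.
  - apply top_eq. eapply fle_trans; [apply (p_up_ne e Hc p)|]. apply Join_le; intro y.
    apply (le_Join _ _ (f y)). apply fsup_ub. exists y; auto.
  - intros m1 m2. unfold Fp, Limage at 1 2. apply fsup_meet_r; intros s1 [y1 [<- ->]].
    apply fsup_meet_l; intros s2 [y2 [<- ->]].
    eapply fle_trans; [apply (p_up_dir e Hc p y1 y2)|]. apply Join_le; intro z.
    apply (le_Join _ _ (f z)). apply fmeet_glb; [apply fmeet_glb|].
    + apply (leT _ (pv p (up z))); [mp|]. apply fsup_ub; exists z; auto.
    + apply (leT _ (e y1 z)); [mp|apply (scott_mono P M e eM f He HeM Hf)].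
    + apply (leT _ (e y2 z)); [mp|apply (scott_mono P M e eM f He HeM Hf)].
Qed.

Definition fbar (p : Q) : M :=
  proj1_sig (constructive_indefinite_description _ (proj2 (proj2 HM) (Fp p) (Fp_dir p))).

Lemma fbar_sup p : is_Lsup eM (Fp p) (fbar p).
Proof. unfold fbar. destruct constructive_indefinite_description; assumption. Qed.

Lemma fbar_eq p m : eM (fbar p) m = Lsub (fun y => pv p (up y)) (fun y => eM (f y) m).
Proof. rewrite (fbar_sup p m). unfold Fp, down. apply Limage_Lsub. Qed.

Lemma fbar_eta x : fbar (eta e x) = f x.
Proof.
  apply (Lsup_unique eM HeM (Fp (eta e x))); [apply fbar_sup|].
  apply (Hf (W x) x (wb_dir e Hc x) (wb_sup e Hc x)).
Qed.

Lemma fbar_cont : scott_continuous E eM fbar.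
Proof.
  intros D s HD Hs m. unfold down. rewrite Limage_Lsub, fbar_eq. apply fle_antisym.
  - apply Lsub_ge; intro q. rewrite fbar_eq. apply Lsub_ge; intro y.
    apply (leT _ (Lsub (fun y => pv s (up y)) (fun y => eM (f y) m) ⊓ pv s (up y)));
      [|apply (Lsub_app' _ (fun y => pv s (up y)) (fun y => eM (f y) m) y)].
    apply fmeet_glb; [mp|]. rewrite (Qsup_pointwise e D s (up y) HD Hs).
    apply (le_Join _ _ q). mp.
  - apply Lsub_ge; intro y. rewrite (Qsup_pointwise e D s (up y) HD Hs).
    apply Join_meet_l; intro q.
    apply (leT _ (eM (fbar q) m ⊓ pv q (up y))).
    + apply fmeet_glb; [|mp].
      apply (leT _ (Lsub D (fun q => eM (fbar q) m) ⊓ D q)); [mp|].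
      apply (Lsub_app' _ D (fun q => eM (fbar q) m) q).
    + rewrite fbar_eq. apply (Lsub_app' _ (fun y => pv q (up y)) (fun y => eM (f y) m) y).
Qed.

Lemma fbar_unique (g : Q -> M) : scott_continuous E eM g -> (forall x, g (eta e x) = f x) -> g = fbar.
Proof.
  intros Hg Hgf. apply functional_extensionality; intro p.
  apply (Lsup_unique eM HeM (Fp p)); [|apply fbar_sup].
  pose proof (Hg (R e Hc p) p (proj1 (R_ideal e Hc p)) (R_sup e Hc p)) as H.
  intro m. rewrite (H m). unfold down, Fp. rewrite !Limage_Lsub. apply fle_antisym.
  - apply Lsub_ge; intro y. rewrite <- Hgf.
    apply (leT _ (Lsub (R e Hc p) (fun q => eM (g q) m) ⊓ R e Hc p (eta e y)));
      [|apply (Lsub_app' _ (R e Hc p) (fun q => eM (g q) m) (eta e y))].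
    apply fmeet_glb; [mp|]. apply (leT _ (pv p (up y))); [mp|apply R_eta].
  - apply Lsub_ge; intro q. unfold R. apply Join_meet_l; intro y.
    apply Mtr with (g (eta e y)).
    + apply (leT _ (E q (eta e y))); [mp|apply (scott_mono _ _ E eM g HE HeM Hg)].
    + rewrite Hgf. apply (leT _ (Lsub (fun y => pv p (up y)) (fun y => eM (f y) m) ⊓ pv p (up y)));
        [mp|apply (Lsub_app' _ (fun y => pv p (up y)) (fun y => eM (f y) m) y)].
Qed.

End U.

Theorem theorem6p5 (L : frame) (P : Type) (e : P -> P -> L) :
  continuous_Lordered e ->
  directed_completion e (@sub_pt L P e) (@eta L P e).
Proof.
  intro Hc. split; [apply (Q_cont e Hc)|split; [apply (eta_cont e Hc)|]].
  intros M eM HM f Hf. exists (fbar e Hc eM HM f Hf). split.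
  - split; [apply fbar_cont|apply fbar_eta].
  - intros g [Hg Hgf]. symmetry. apply fbar_unique; auto.
Qed.
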